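(* Let $n\ge 0$ be an integer and for $k\in\mathbb{Z}_+$ let $$v_k(t)=c_k\,e^{-\frac{t^{2n+2}}{2n+2}}L^{(-\frac{1}{2n+2})}_{k}\!\left(\frac{t^{2n+2}}{n+1}\right),\qquad w_k(t)=d_k\,e^{-\frac{t^{2n+2}}{2n+2}}\,t\,L^{(\frac{1}{2n+2})}_{k}\!\left(\frac{t^{2n+2}}{n+1}\right),$$ with $c_k,d_k>0$ chosen so that $\|t^nv_k\|_{L^2(\mathbb{R})}=\|t^nw_k\|_{L^2(\mathbb{R})}=1$, and let $E_k=4k(n+1)+2n+1$. There exists a constant $C_1>0$ such that for all $k\in\mathbb{Z}_+$ $$\|v_k'\|_{L^\infty(\mathbb{R})}\le C_1E_k^{\frac72-\frac{1}{4n+4}},\qquad \|w_k'\|_{L^\infty(\mathbb{R})}\le C_1E_k^{\frac72-\frac{1}{4n+4}}.$$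
   Context: $L^{(a)}_k$ denotes the generalized Laguerre polynomial of degree $k$ and parameter $a$. These functions solve $-u''+t^{2(2n+1)}u=E\,t^{2n}u$, with $E=E_k$ for $v_k$ and $E=4k(n+1)+2n+3$ for $w_k$. *)

(* Defs.v *)
From Stdlib Require Import Reals.
From Coquelicot Require Import Coquelicot.
Open Scope R_scope.

Fixpoint lag_prod (a : R) (i m : nat) : R :=
  match m with
  | O => 1
  | S m' => (a + INR (i + S m')) * lag_prod a i m'
  end.

(* Generalized Laguerre polynomial
   L_k^{(a)}(x) = sum_{i=0}^k (-1)^i binom(k+a, k-i) x^i / i!,
   where binom(k+a, k-i) = prod_{j=i+1}^{k} (a+j) / (k-i)!. *)
Definition laguerre (k : nat) (a x : R) : R :=
  sum_f_R0 (fun i => (-1) ^ i * lag_prod a i (k - i)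
                     / (INR (Factorial.fact (k - i)) * INR (Factorial.fact i)) * x ^ i) k.

Definition v0 (n k : nat) (t : R) : R :=
  exp (- t ^ (2*n+2) / INR (2*n+2)) *
  laguerre k (- / INR (2*n+2)) (t ^ (2*n+2) / INR (n+1)).

Definition w0 (n k : nat) (t : R) : R :=
  exp (- t ^ (2*n+2) / INR (2*n+2)) * t *
  laguerre k (/ INR (2*n+2)) (t ^ (2*n+2) / INR (n+1)).

Definition wL2norm (n : nat) (f : R -> R) : R :=
  sqrt (RInt_gen (fun t => (t ^ n * f t) ^ 2)
          (Rbar_locally m_infty) (Rbar_locally p_infty)).

Definition c_const (n k : nat) : R := / wL2norm n (v0 n k).
Definition d_const (n k : nat) : R := / wL2norm n (w0 n k).

Definition v (n k : nat) (t : R) : R := c_const n k * v0 n k t.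
Definition w (n k : nat) (t : R) : R := d_const n k * w0 n k t.

Definition Ek (n k : nat) : R := INR (4 * k * (n + 1) + 2 * n + 1).

(* Main.v *)
Require Import Defs.
From Stdlib Require Import Reals Lra Lia Classical.
From Coquelicot Require Import Coquelicot.
Open Scope R_scope.

Lemma dmul (f g : R -> R) x a b :
  is_derive f x a -> is_derive g x b -> is_derive (fun t => f t * g t) x (a * g x + f x * b).
Proof. intros Ha Hb. apply (is_derive_mult f g x a b Ha Hb). intros; apply Rmult_comm. Qed.

Lemma dplus (f g : R -> R) x a b :
  is_derive f x a -> is_derive g x b -> is_derive (fun t => f t + g t) x (a + b).
Proof. intros Ha Hb. apply (is_derive_plus f g x a b Ha Hb). Qed.

Lemma dcomp (f g : R -> R) x a b :
  is_derive f (g x) a -> is_derive g x b -> is_derive (fun t => f (g t)) x (b * a).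
Proof. intros Ha Hb. apply (is_derive_comp f g x a b Ha Hb). Qed.

Lemma dext (f g : R -> R) x a b :
  (forall t, f t = g t) -> @eq R a b -> is_derive f x a -> is_derive g x b.
Proof. intros H -> Hf. apply (is_derive_ext f g x b H Hf). Qed.

Lemma dconst (c x : R) : is_derive (fun _ => c) x 0.
Proof. apply (is_derive_const c x). Qed.

Lemma did (x : R) : is_derive (fun t => t) x 1.
Proof. apply (is_derive_id x). Qed.

Lemma dpow (m : nat) (x : R) : is_derive (fun t => t ^ m) x (INR m * x ^ pred m).
Proof.
  eapply dext. 3: apply (is_derive_pow (fun t => t) m x 1 (did x)). reflexivity. simpl. ring.
Qed.

Lemma dexp (f : R -> R) x a : is_derive f x a -> is_derive (fun t => exp (f t)) x (a * exp (f x)).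
Proof. intros H. apply (dcomp exp f x (exp (f x)) a). apply is_derive_exp. exact H. Qed.

Definition poly (c : nat -> R) (N : nat) (x : R) : R := sum_f_R0 (fun i => c i * x ^ i) N.
Definition Dc (c : nat -> R) (i : nat) : R := INR (S i) * c (S i).
Definition shiftc (c : nat -> R) (i : nat) : R := match i with O => 0 | S j => c j end.

Lemma poly_deriv c N x : is_derive (poly c (S N)) x (poly (Dc c) N x).
Proof.
  induction N.
  - eapply dext. 3: apply (dplus (fun _ => c O) (fun t => c 1%nat * t ^ 1)); [apply dconst | apply dmul; [apply dconst | apply dpow]].
    intros t; unfold poly; simpl; ring. unfold poly, Dc; simpl; ring.
  - eapply dext. 3: apply (dplus (poly c (S N)) (fun t => c (S (S N)) * t ^ (S (S N)))); [apply IHN | apply dmul; [apply dconst | apply dpow]].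
    intros t; unfold poly; simpl; ring.
    unfold poly, Dc; simpl. ring.
Qed.

Lemma poly_plus c d N x : poly (fun i => c i + d i) N x = poly c N x + poly d N x.
Proof. unfold poly. rewrite <- plus_sum. apply sum_eq. intros; ring. Qed.

Lemma poly_scal a c N x : poly (fun i => a * c i) N x = a * poly c N x.
Proof. unfold poly. induction N; simpl; [ring|]. rewrite IHN. ring. Qed.

Lemma poly_shift c N x : x * poly c N x = poly (shiftc c) (S N) x.
Proof. unfold poly. induction N; simpl. ring. simpl in IHN. rewrite <- IHN. ring. Qed.

Lemma poly_ext c d N x : (forall i, (i <= N)%nat -> c i = d i) -> poly c N x = poly d N x.
Proof. intros H. unfold poly. apply sum_eq. intros i Hi. rewrite H; auto. Qed.

Lemma poly_extN c N m x : (forall i, (N < i)%nat -> c i = 0) -> poly c (N + m) x = poly c N x.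
Proof.
  intros H. induction m. rewrite Nat.add_0_r; reflexivity.
  rewrite Nat.add_succ_r. unfold poly in *; simpl. rewrite IHm. rewrite H by lia. ring.
Qed.

Lemma poly_zero c N x : (forall i, c i = 0) -> poly c N x = 0.
Proof. intros H. unfold poly. induction N; simpl; rewrite H; [ring|]. rewrite IHN; ring. Qed.

Lemma poly_at0 c N : poly c N 0 = c O.
Proof. unfold poly. induction N; simpl. ring. rewrite IHN. ring. Qed.

Definition lc (k : nat) (a : R) (i : nat) : R :=
  if Nat.leb i k then (-1) ^ i * lag_prod a i (k - i)
        / (INR (Factorial.fact (k - i)) * INR (Factorial.fact i)) else 0.

Lemma lc_out k a i : (k < i)%nat -> lc k a i = 0.
Proof. intros H. unfold lc. destruct (Nat.leb_spec i k); [lia|reflexivity]. Qed.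

Lemma laguerre_poly k a m x : laguerre k a x = poly (lc k a) (k + m) x.
Proof.
  rewrite poly_extN by (intros; apply lc_out; lia).
  unfold laguerre, poly. apply sum_eq. intros i Hi. unfold lc.
  destruct (Nat.leb_spec i k); [reflexivity|lia].
Qed.

Lemma lag_peel a i m : lag_prod a i (S m) = (a + INR (S i)) * lag_prod a (S i) m.
Proof.
  revert i. induction m; intros i.
  - change (lag_prod a i 1) with ((a + INR (i + 1)) * 1). change (lag_prod a (S i) 0) with 1. rewrite Nat.add_1_r. ring.
  - change (lag_prod a i (S (S m))) with ((a + INR (i + S (S m))) * lag_prod a i (S m)).
    rewrite IHm. change (lag_prod a (S i) (S m)) with ((a + INR (S i + S m)) * lag_prod a (S i) m).
    replace (i + S (S m))%nat with (S i + S m)%nat by lia. ring.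
Qed.

Lemma INR_fact_pos m : 0 < INR (Factorial.fact m).
Proof. apply lt_0_INR. apply Factorial.lt_O_fact. Qed.

Lemma lc_rec k a i :
  INR (S i) * (a + INR (S i)) * lc k a (S i) + (INR k - INR i) * lc k a i = 0.
Proof.
  destruct (Nat.lt_ge_cases i k) as [Hlt|Hge].
  - unfold lc. destruct (Nat.leb_spec (S i) k); [|lia]. destruct (Nat.leb_spec i k); [|lia].
    replace (k - i)%nat with (S (k - S i)) by lia.
    rewrite lag_peel. 
    change (Factorial.fact (S (k - S i))) with ((S (k - S i)) * Factorial.fact (k - S i))%nat.
    change (Factorial.fact (S i)) with ((S i) * Factorial.fact i)%nat.
    rewrite !mult_INR.
    assert (HS : INR (S (k - S i)) = INR k - INR i).
    { rewrite S_INR, minus_INR by lia. rewrite S_INR. ring. }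
    rewrite HS. simpl pow.
    pose proof (INR_fact_pos (k - S i)). pose proof (INR_fact_pos i).
    assert (INR k - INR i <> 0). { rewrite <- HS. apply not_0_INR. lia. }
    assert (INR (S i) <> 0) by (apply not_0_INR; lia).
    field. repeat split; lra.
  - destruct (Nat.eq_dec i k) as [->|Hne].
    + rewrite (lc_out k a (S k)) by lia. ring.
    + rewrite !lc_out by lia. ring.
Qed.

Section ODE.
Variables (k : nat) (a : R).
Let c := lc k a.
Definition ly x := poly c (S (S k)) x.
Definition ly1 x := poly (Dc c) (S k) x.
Definition ly2 x := poly (Dc (Dc c)) k x.

Lemma ly_d x : is_derive ly x (ly1 x).
Proof. apply poly_deriv. Qed.
Lemma ly1_d x : is_derive ly1 x (ly2 x).
Proof. apply poly_deriv. Qed.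

Lemma ly_lag x : ly x = laguerre k a x.
Proof. rewrite (laguerre_poly k a 2). unfold ly. f_equal. lia. Qed.

Lemma lag_ode x : x * ly2 x + (a + 1 - x) * ly1 x + INR k * ly x = 0.
Proof.
  unfold ly, ly1, ly2.
  rewrite poly_shift.
  replace ((a + 1 - x) * poly (Dc c) (S k) x) with
    ((a+1) * poly (Dc c) (S (S k)) x + (-1) * poly (shiftc (Dc c)) (S (S k)) x).
  2:{ rewrite <- poly_shift. replace (S (S k)) with (S k + 1)%nat by lia.
      rewrite poly_extN. ring. intros i Hi. unfold Dc, c. rewrite lc_out by lia. ring. }
  replace (poly (shiftc (Dc (Dc c))) (S k) x) with (poly (shiftc (Dc (Dc c))) (S (S k)) x).
  2:{ replace (S (S k)) with (S k + 1)%nat by lia. apply poly_extN.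
      intros i Hi. destruct i; [lia|]. simpl. unfold Dc, c. rewrite lc_out by lia. ring. }
  rewrite <- !poly_scal, <- !poly_plus.
  apply poly_zero. intros i. destruct i.
  - simpl. pose proof (lc_rec k a 0). unfold Dc, c. simpl in *. lra.
  - simpl. pose proof (lc_rec k a (S i)). unfold Dc, c. rewrite !S_INR in *. 
    replace (INR (S (S i))) with (INR i + 1 + 1) in * by (rewrite !S_INR; ring).
    lra.
Qed.
End ODE.

Lemma lag_pos a m : -1/2 <= a -> 0 < lag_prod a 0 m.
Proof.
  intros Ha. induction m. simpl; lra.
  change (lag_prod a 0 (S m)) with ((a + INR (0 + S m)) * lag_prod a 0 m).
  apply Rmult_lt_0_compat; auto. simpl (0 + S m)%nat. rewrite S_INR. pose proof (pos_INR m). lra.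
Qed.

Lemma lc0_pos k a : -1/2 <= a -> 0 < lc k a 0.
Proof.
  intros Ha. unfold lc. simpl Nat.leb. rewrite Nat.sub_0_r. simpl pow.
  pose proof (lag_pos a k Ha). pose proof (INR_fact_pos k). simpl (INR (Factorial.fact 0)).
  apply Rmult_lt_0_compat. lra. apply Rinv_0_lt_compat. nra.
Qed.

Lemma lc_bound k a i : -1/2 <= a ->
  Rabs (lc k a i) <= lc k a 0 * (2 * (INR k + 1)) ^ i.
Proof.
  intros Ha. pose proof (lc0_pos k a Ha). induction i.
  - simpl. rewrite Rabs_right; lra.
  - destruct (Nat.lt_ge_cases i k) as [Hlt|Hge].
    + pose proof (lc_rec k a i) as Hr.
      set (d := INR (S i) * (a + INR (S i))) in Hr.
      assert (Hd : 1/2 <= d). { unfold d. rewrite S_INR. pose proof (pos_INR i). nra. }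
      assert (Hki : 0 <= INR k - INR i <= INR k + 1).
      { pose proof (pos_INR i). assert (INR i <= INR k) by (apply le_INR; lia). lra. }
      assert (E1 : d * Rabs (lc k a (S i)) = (INR k - INR i) * Rabs (lc k a i)).
      { rewrite <- (Rabs_right d) by lra. rewrite <- (Rabs_right (INR k - INR i)) by lra.
        rewrite <- !Rabs_mult. rewrite <- Rabs_Ropp. f_equal. lra. }
      simpl pow.
      pose proof (Rabs_pos (lc k a (S i))). pose proof (Rabs_pos (lc k a i)).
      assert (0 <= (2 * (INR k + 1)) ^ i) by (apply pow_le; pose proof (pos_INR k); lra).
      assert (S1 : 1/2 * Rabs (lc k a (S i)) <= d * Rabs (lc k a (S i))) by (apply Rmult_le_compat_r; lra).
      assert (S2 : (INR k - INR i) * Rabs (lc k a i) <= (INR k + 1) * (lc k a 0 * (2 * (INR k + 1)) ^ i)).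
      { apply Rmult_le_compat; lra. }
      lra.
    + rewrite lc_out by lia. rewrite Rabs_R0. apply Rmult_le_pos. lra. apply pow_le. pose proof (pos_INR k); lra.
Qed.

Lemma poly_S c N x : poly c (S N) x = c O + x * poly (fun i => c (S i)) N x.
Proof.
  induction N. unfold poly; simpl; ring.
  change (poly c (S (S N)) x) with (poly c (S N) x + c (S (S N)) * x ^ (S (S N))).
  rewrite IHN. change (poly (fun i => c (S i)) (S N) x) with (poly (fun i => c (S i)) N x + c (S (S N)) * x ^ (S N)).
  simpl. ring.
Qed.

Lemma poly_geo d N x M q rho : 0 <= x -> 0 <= q -> 0 <= rho < 1 -> q * x <= rho ->
  (forall i, Rabs (d i) <= M * q ^ i) -> Rabs (poly d N x) <= M / (1 - rho).
Proof.
  intros Hx Hq Hr Hqx Hd.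
  assert (HM : 0 <= M). { specialize (Hd O). simpl in Hd. pose proof (Rabs_pos (d O)). lra. }
  unfold poly. eapply Rle_trans. apply Rabs_triang_gen.
  apply Rle_trans with (sum_f_R0 (fun i => M * (q*x) ^ i) N).
  { apply sum_Rle. intros i _. rewrite Rabs_mult, Rpow_mult_distr.
    rewrite (Rabs_right (x ^ i)) by (apply Rle_ge, pow_le; lra).
    rewrite <- Rmult_assoc. apply Rmult_le_compat_r. apply pow_le; lra. apply Hd. }
  apply Rle_trans with (sum_f_R0 (fun i => M * rho ^ i) N).
  { apply sum_Rle. intros i _. apply Rmult_le_compat_l; auto. apply pow_incr. split; nra. }
  clear Hd. induction N.
  - simpl. apply Rmult_le_reg_r with (1 - rho). lra. field_simplify; nra.
  - assert (forall N, sum_f_R0 (fun i => M * rho ^ i) N = M * (1 - rho ^ S N) / (1 - rho)).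
    { intros N0. replace (M * (1 - rho ^ S N0) / (1 - rho)) with (M * ((1 - rho ^ S N0) / (1 - rho))) by (field; lra).
      rewrite <- (tech3 rho N0) by lra. clear IHN. induction N0; simpl; [ring|]. rewrite IHN0. ring. }
    rewrite H. apply Rmult_le_compat_r. apply Rlt_le, Rinv_0_lt_compat; lra.
    assert (0 <= rho ^ S (S N)) by (apply pow_le; lra). nra.
Qed.

Lemma INR_S_le_pow2 i : INR (S i) <= 2 ^ i.
Proof. induction i. simpl; lra. rewrite S_INR. simpl pow. assert (1 <= 2 ^ i) by (apply pow_R1_Rle; lra). lra. Qed.

Section Small.
Variables (k : nat) (a : R).
Hypothesis Ha : -1/2 <= a.
Let c0 := lc k a 0.
Let K := INR k + 1.

Lemma ly_close x : 0 <= x -> 2 * K * x <= 1/3 -> Rabs (ly k a x - c0) <= c0 / 2.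
Proof.
  intros Hx Hz. unfold ly. rewrite poly_S.
  replace (lc k a 0 + x * poly (fun i => lc k a (S i)) (S k) x - c0) with (x * poly (fun i => lc k a (S i)) (S k) x) by (unfold c0; ring).
  rewrite Rabs_mult, Rabs_right by lra.
  assert (HK : 1 <= K) by (unfold K; pose proof (pos_INR k); lra).
  assert (Hp : Rabs (poly (fun i => lc k a (S i)) (S k) x) <= (c0 * (2*K)) / (1 - 1/3)).
  { apply poly_geo with (q := 2*K); try lra. intros i. pose proof (lc_bound k a (S i) Ha).
    simpl pow in H. fold K in H. fold c0 in H. lra. }
  pose proof (lc0_pos k a Ha). fold c0 in H.
  apply Rle_trans with (x * (c0 * (2 * K) / (1 - 1 / 3))). apply Rmult_le_compat_l; lra.
  replace (x * (c0 * (2 * K) / (1 - 1 / 3))) with ((2*K*x) * c0 * (3/2)) by field. nra.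
Qed.

Lemma ly1_bound x : 0 <= x -> 2 * K * x <= 1/3 -> Rabs (ly1 k a x) <= 6 * K * c0.
Proof.
  intros Hx Hz. unfold ly1.
  assert (HK : 1 <= K) by (unfold K; pose proof (pos_INR k); lra).
  pose proof (lc0_pos k a Ha). fold c0 in H.
  replace (6 * K * c0) with ((2 * K * c0) / (1 - 2/3)) by field.
  apply poly_geo with (q := 4 * K); try lra.
  intros i. unfold Dc. rewrite Rabs_mult, Rabs_right by (apply Rle_ge, pos_INR).
  pose proof (lc_bound k a (S i) Ha). fold K c0 in H0. pose proof (INR_S_le_pow2 i).
  replace ((4 * K) ^ i) with (2 ^ i * (2 * K) ^ i) by (rewrite <- Rpow_mult_distr; f_equal; ring).
  simpl pow in H0. 
  assert (0 <= (2*K)^i) by (apply pow_le; lra). assert (0 <= 2^i) by (apply pow_le; lra).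
  pose proof (Rabs_pos (lc k a (S i))). pose proof (pos_INR (S i)).
  apply Rle_trans with (INR (S i) * (c0 * (2 * K * (2 * K) ^ i))). apply Rmult_le_compat_l; lra.
  apply Rle_trans with (2 ^ i * (c0 * (2 * K * (2 * K) ^ i))). apply Rmult_le_compat_r. 
  apply Rmult_le_pos; [lra|]. apply Rmult_le_pos; lra. lra. right; ring.
Qed.
End Small.

Lemma mono_le (f df : R -> R) a b : a <= b ->
  (forall x, a <= x <= b -> is_derive f x (df x)) ->
  (forall x, a <= x <= b -> 0 <= df x) -> f a <= f b.
Proof.
  intros Hab Hd Hp.
  destruct (MVT_gen f a b df) as [c [Hc Heq]].
  - intros x Hx. rewrite Rmin_left, Rmax_right in Hx by lra. apply Hd; lra.
  - intros x Hx. rewrite Rmin_left, Rmax_right in Hx by lra.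
    apply continuity_pt_filterlim. apply (ex_derive_continuous f x). exists (df x). apply Hd; lra.
  - rewrite Rmin_left, Rmax_right in Hc by lra. specialize (Hp c Hc). nra.
Qed.

Lemma mono_ge (f df : R -> R) a b : a <= b ->
  (forall x, a <= x <= b -> is_derive f x (df x)) ->
  (forall x, a <= x <= b -> df x <= 0) -> f b <= f a.
Proof.
  intros Hab Hd Hp. cut (- f a <= - f b). lra.
  apply (mono_le (fun x => - f x) (fun x => - df x)); auto.
  intros x Hx. cbv beta. eapply dext. 3: apply (is_derive_scal f x (-1) (df x) (Hd x Hx)). { intros t; cbv beta; ring. } { simpl; ring. }
  intros x Hx. specialize (Hp x Hx). lra.
Qed.

Lemma pow_Rpower_inv y m : 0 < y -> (0 < m)%nat -> (Rpower y (/ INR m)) ^ m = y.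
Proof.
  intros Hy Hm. rewrite <- Rpower_pow by (apply exp_pos). rewrite Rpower_mult.
  rewrite Rinv_l by (apply not_0_INR; lia). apply Rpower_1; auto.
Qed.

Lemma pow_lt_inv x y m : 0 <= x -> 0 <= y -> x ^ m < y ^ m -> x < y.
Proof. intros Hx Hy H. destruct (Rlt_or_le x y); auto. assert (y ^ m <= x ^ m) by (apply pow_incr; lra). lra. Qed.

Lemma tpow_pred t n : (0 < n)%nat -> t * t ^ pred (2*n) = t ^ (2*n).
Proof. intros H. replace (2*n)%nat with (S (pred (2*n))) at 2 by lia. reflexivity. Qed.

Section Sturm.
Variables (n : nat) (E : R) (u u1 : R -> R).
Definition PP t := E * t ^ (2*n) - t ^ (4*n+2).
Definition dPP t := E * (INR (2*n) * t ^ pred (2*n)) - INR (4*n+2) * t ^ pred (4*n+2).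
Hypothesis HE : 1 <= E.
Hypothesis Hu : forall t, is_derive u t (u1 t).
Hypothesis Hu1 : forall t, is_derive u1 t (- PP t * u t).

Lemma PP_d t : is_derive PP t (dPP t).
Proof.
  unfold PP, dPP. eapply dext; [ | | apply (dplus _ _ t _ _ (is_derive_scal _ t E _ (dpow (2*n) t)) (is_derive_scal _ t (-1) _ (dpow (4*n+2) t)))].
  - intros; cbv beta; ring.
  - cbv beta. ring.
Qed.

Lemma pow_split t : t ^ (2*n+2) = t ^ (2*n) * t * t /\ t ^ (4*n+2) = t^(2*n) * t^(2*n) * t * t.
Proof.
  split. replace (2*n+2)%nat with (S (S (2*n))) by lia. simpl. ring.
  replace (4*n+2)%nat with (S (S (2*n + 2*n))) by lia. rewrite <- (pow_add t (2*n) (2*n)). simpl. ring.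
Qed.

Lemma PP_fact t : PP t = t ^ (2*n) * (E - t ^ (2*n+2)).
Proof. unfold PP. destruct (pow_split t) as [A B]. rewrite A, B. ring. Qed.

Lemma dPP_fact t : t * dPP t = 2 * t ^ (2*n) * (INR n * E - (2 * INR n + 1) * t ^ (2*n+2)).
Proof.
  unfold dPP. destruct (pow_split t) as [A B]. rewrite A.
  replace (pred (4*n+2)) with (S (2*n + 2*n)) by lia. rewrite <- tech_pow_Rmult, pow_add.
  destruct (Nat.eq_dec n 0) as [H0|H0].
  - rewrite H0. simpl. ring.
  - replace (t * (E * (INR (2 * n) * t ^ pred (2 * n)) - INR (4 * n + 2) * (t * (t ^ (2 * n) * t ^ (2 * n)))))
      with (E * INR (2 * n) * (t * t ^ pred (2 * n)) - INR (4 * n + 2) * (t * t * (t ^ (2 * n) * t ^ (2 * n)))) by ring.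
    rewrite tpow_pred by lia. rewrite !plus_INR, !mult_INR. simpl (INR 2). simpl (INR 4). ring.
Qed.

Definition HH t := u1 t * u1 t + PP t * (u t * u t).
Definition dHH t := dPP t * (u t * u t).
Definition GG t := HH t / PP t.

Lemma HH_d t : is_derive HH t (dHH t).
Proof.
  eapply dext; [ | | apply (dplus _ _ t _ _ (dmul _ _ t _ _ (Hu1 t) (Hu1 t)) (dmul _ _ t _ _ (PP_d t) (dmul _ _ t _ _ (Hu t) (Hu t))))].
  - intros; unfold HH; reflexivity.
  - unfold dHH. ring.
Qed.

Lemma GG_d t : PP t <> 0 -> is_derive GG t (- dPP t * (u1 t * u1 t) / (PP t) ^ 2).
Proof.
  intros H. eapply dext; [ | | apply (is_derive_div _ _ t _ _ (HH_d t) (PP_d t) H)].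
  - intros; unfold GG; reflexivity.
  - unfold dHH, HH. field. auto.
Qed.

Lemma pow2n_le t : 0 <= t -> t ^ (2*n) <= 1 + t ^ (2*n+2).
Proof.
  intros Ht. destruct (pow_split t) as [A _]. rewrite A.
  assert (0 <= t ^ (2*n)) by (apply pow_le; lra).
  destruct (Rle_or_lt t 1).
  - assert (t ^ (2*n) <= 1) by (rewrite <- (pow1 (2*n)); apply pow_incr; lra). nra.
  - assert (1 <= t * t) by nra. assert (0 <= t ^ (2*n) * (t * t - 1)) by (apply Rmult_le_pos; lra). nra.
Qed.

Lemma PP_le t : 0 <= t -> t ^ (2*n+2) <= E -> PP t <= 2 * E ^ 2.
Proof.
  intros Ht H. rewrite PP_fact. pose proof (pow2n_le t Ht).
  assert (0 <= t ^ (2*n)) by (apply pow_le; lra). assert (0 <= t ^ (2*n+2)) by (apply pow_le; lra).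
  apply Rle_trans with (t ^ (2*n) * E). apply Rmult_le_compat_l; lra. nra.
Qed.

Lemma PP_pos t : 0 < t -> t ^ (2*n+2) < E -> 0 < PP t.
Proof. intros Ht H. rewrite PP_fact. apply Rmult_lt_0_compat. apply pow_lt; lra. lra. Qed.

Lemma nE_lt_E x : (2 * INR n + 1) * x <= INR n * E -> x < E.
Proof. intros H. pose proof (pos_INR n). nra. Qed.

Lemma regionA s t : 0 < s <= t -> (2 * INR n + 1) * t ^ (2*n+2) <= INR n * E -> GG t <= GG s.
Proof.
  intros Hst Ht.
  assert (Hx : forall x, s <= x <= t -> 0 < PP x /\ 0 <= dPP x).
  { intros x Hx. assert (x ^ (2*n+2) <= t ^ (2*n+2)) by (apply pow_incr; lra).
    pose proof (pos_INR n).
    split. apply PP_pos. lra. apply nE_lt_E. nra.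
    pose proof (dPP_fact x). assert (0 < x ^ (2*n)) by (apply pow_lt; lra).
    assert (0 <= x * dPP x). { rewrite H1. apply Rmult_le_pos. lra. nra. }
    apply Rmult_le_reg_l with x. lra. lra. }
  apply (mono_ge GG (fun x => - dPP x * (u1 x * u1 x) / (PP x) ^ 2)). lra.
  intros x Hxx. apply GG_d. destruct (Hx x Hxx); lra.
  intros x Hxx. destruct (Hx x Hxx). unfold Rdiv.
  assert (0 < / PP x ^ 2) by (apply Rinv_0_lt_compat, pow_lt; lra).
  assert (0 <= u1 x * u1 x) by nra. 
  assert (0 <= dPP x * (u1 x * u1 x)) by nra. nra.
Qed.

Lemma regionB a t : 0 < a <= t -> INR n * E <= (2 * INR n + 1) * a ^ (2*n+2) -> HH t <= HH a.
Proof.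
  intros Hat Ha.
  apply (mono_ge HH dHH). lra. intros; apply HH_d.
  intros x Hx. unfold dHH. assert (a ^ (2*n+2) <= x ^ (2*n+2)) by (apply pow_incr; lra).
  pose proof (pos_INR n). pose proof (dPP_fact x). assert (0 < x ^ (2*n)) by (apply pow_lt; lra).
  assert (x * dPP x <= 0). { rewrite H1. assert (INR n * E - (2 * INR n + 1) * x ^ (2 * n + 2) <= 0) by nra. nra. }
  assert (dPP x <= 0). { apply Rmult_le_reg_l with x. lra. lra. }
  assert (0 <= u x * u x) by nra. nra.
Qed.

Lemma decay T : 0 <= T -> (forall tau, T <= tau -> PP tau <= 0) ->
  (exists B, forall t, 0 <= t -> Rabs (u t) <= B) ->
  forall t, T <= t -> u1 t * u1 t <= u1 T * u1 T.
Proof.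
  intros HT HP [B HB].
  assert (Hs : forall tau, T <= tau -> u tau * u1 tau <= 0).
  { intros t0 Ht0. destruct (Rle_or_lt (u t0 * u1 t0) 0) as [|Hd]; auto. exfalso.
    set (d := u t0 * u1 t0) in *.
    assert (Hg : forall tau, t0 <= tau -> d <= u tau * u1 tau).
    { intros tau Htau. apply (mono_le (fun x => u x * u1 x) (fun x => u1 x * u1 x + u x * (- PP x * u x))). lra.
      intros x Hx. apply (dmul _ _ x _ _ (Hu x) (Hu1 x)).
      intros x Hx. specialize (HP x ltac:(lra)). 
      assert (0 <= u1 x * u1 x) by nra. assert (0 <= u x * u x) by nra. nra. }
    assert (Hq : forall tau, t0 <= tau -> u t0 * u t0 + 2 * d * (tau - t0) <= u tau * u tau).
    { intros tau Htau.
      assert (Hm := mono_le (fun x => u x * u x - 2 * d * x) (fun x => u1 x * u x + u x * u1 x - 2 * d) t0 tau Htau).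
      cbv beta in Hm. 
      assert (u t0 * u t0 - 2 * d * t0 <= u tau * u tau - 2 * d * tau).
      { apply Hm.
        - intros x Hx. eapply dext; [ | | apply (dplus _ _ x _ _ (dmul _ _ x _ _ (Hu x) (Hu x)) (is_derive_scal _ x (- (2 * d)) _ (did x)))].
          intros; cbv beta; ring. ring.
        - intros x Hx. specialize (Hg x ltac:(lra)). lra. }
      lra. }
    assert (HB0 : 0 <= B) by (specialize (HB t0 ltac:(lra)); pose proof (Rabs_pos (u t0)); lra).
    set (tau := t0 + (B * B + 1) / (2 * d)).
    assert (t0 <= tau). { unfold tau. assert (0 <= (B * B + 1) / (2 * d)). apply Rlt_le, Rdiv_lt_0_compat; nra. lra. }
    specialize (Hq tau H). specialize (HB tau ltac:(lra)).
    assert (2 * d * (tau - t0) = B * B + 1) by (unfold tau; field; lra).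
    assert (u tau * u tau <= B * B).
    { assert (Rabs (u tau) * Rabs (u tau) = u tau * u tau) by (rewrite <- Rabs_mult; apply Rabs_right; nra).
      pose proof (Rabs_pos (u tau)). nra. }
    nra. }
  intros t Ht.
  apply (mono_ge (fun x => u1 x * u1 x) (fun x => (- PP x * u x) * u1 x + u1 x * (- PP x * u x))). lra.
  intros x Hx. apply (dmul _ _ x _ _ (Hu1 x) (Hu1 x)).
  intros x Hx. specialize (HP x ltac:(lra)). specialize (Hs x ltac:(lra)). nra.
Qed.


Lemma sturm_main s : 0 < s -> s ^ (2*n+2) <= 1/3 ->
  (exists B, forall t, 0 <= t -> Rabs (u t) <= B) ->
  forall t, s <= t -> u1 t * u1 t <= 2 * E ^ 2 * (u1 s * u1 s / PP s + u s * u s).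
Proof.
  intros Hs Hs2 Hb.
  assert (HPs : 0 < PP s) by (apply PP_pos; lra).
  assert (HR : GG s = u1 s * u1 s / PP s + u s * u s) by (unfold GG, HH; field; lra).
  rewrite <- HR.
  assert (HR0 : 0 <= GG s). { rewrite HR. assert (0 <= u1 s * u1 s) by nra. assert (0 <= u s * u s) by nra.
    assert (0 <= u1 s * u1 s / PP s) by (apply Rle_div_r; lra). lra. }
  assert (HE2 : 1 <= E ^ 2) by (simpl; nra).
  assert (HHb : forall t, s <= t -> HH t <= 2 * E ^ 2 * GG s).
  { intros t Ht. pose proof (pos_INR n) as Hn.
    assert (Hts : s ^ (2*n+2) <= t ^ (2*n+2)) by (apply pow_incr; lra).
    destruct (Rle_or_lt ((2 * INR n + 1) * t ^ (2*n+2)) (INR n * E)) as [HA|HA].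
    - assert (HPt : 0 < PP t) by (apply PP_pos; [lra| apply nE_lt_E; auto]).
      assert (HH t = PP t * GG t) by (unfold GG; field; lra). rewrite H.
      pose proof (regionA s t ltac:(lra) HA).
      assert (PP t <= 2 * E ^ 2) by (apply PP_le; [lra| apply Rlt_le, nE_lt_E; auto]).
      apply Rle_trans with (PP t * GG s). apply Rmult_le_compat_l; lra. apply Rmult_le_compat_r; lra.
    - destruct (Rle_or_lt (INR n * E) ((2 * INR n + 1) * s ^ (2*n+2))) as [HB|HB].
      + apply Rle_trans with (HH s). apply regionB; [lra|auto].
        assert (HH s = PP s * GG s) by (unfold GG; field; lra). rewrite H.
        apply Rmult_le_compat_r; auto. apply PP_le; lra.
      + assert (Hy : 0 < INR n * E / (2 * INR n + 1)).
        { assert (0 <= s ^ (2*n+2)) by (apply pow_le; lra). apply Rdiv_lt_0_compat; nra. }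
        set (t1 := Rpower (INR n * E / (2 * INR n + 1)) (/ INR (2*n+2))).
        assert (Ht1 : t1 ^ (2*n+2) = INR n * E / (2 * INR n + 1)) by (apply pow_Rpower_inv; auto; lia).
        assert (Ht1p : 0 < t1) by (apply exp_pos).
        assert (s < t1). { apply pow_lt_inv with (2*n+2)%nat; try lra. rewrite Ht1.
          apply Rmult_lt_reg_l with (2 * INR n + 1). lra. field_simplify; lra. }
        assert (t1 < t). { apply pow_lt_inv with (2*n+2)%nat; try lra. rewrite Ht1.
          apply Rmult_lt_reg_l with (2 * INR n + 1). lra. field_simplify; lra. }
        assert (Heq : (2 * INR n + 1) * t1 ^ (2*n+2) = INR n * E) by (rewrite Ht1; field; lra).
        apply Rle_trans with (HH t1). apply regionB. lra. lra.
        assert (HPt : 0 < PP t1) by (apply PP_pos; [lra| apply nE_lt_E; lra]).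
        assert (HH t1 = PP t1 * GG t1) by (unfold GG; field; lra). rewrite H1.
        pose proof (regionA s t1 ltac:(lra) ltac:(lra)).
        assert (PP t1 <= 2 * E ^ 2) by (apply PP_le; [lra| apply Rlt_le, nE_lt_E; lra]).
        apply Rle_trans with (PP t1 * GG s). apply Rmult_le_compat_l; lra. apply Rmult_le_compat_r; lra. }
  intros t Ht.
  destruct (Rle_or_lt 0 (PP t)) as [HP|HP].
  - assert (0 <= PP t * (u t * u t)) by (apply Rmult_le_pos; nra).
    specialize (HHb t Ht). unfold HH in HHb. lra.
  - set (T := Rpower E (/ INR (2*n+2))).
    assert (HT : T ^ (2*n+2) = E) by (apply pow_Rpower_inv; [lra|lia]).
    assert (HTp : 0 < T) by (apply exp_pos).
    assert (HsT : s < T) by (apply pow_lt_inv with (2*n+2)%nat; lra).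
    assert (HtT : T <= t).
    { destruct (Rle_or_lt T t); auto. assert (t ^ (2*n+2) <= T ^ (2*n+2)) by (apply pow_incr; lra).
      assert (0 <= PP t). { rewrite PP_fact. apply Rmult_le_pos. apply pow_le; lra. lra. } lra. }
    assert (HPT : PP T = 0) by (rewrite PP_fact, HT; ring).
    apply Rle_trans with (u1 T * u1 T).
    + apply decay; auto. lra. intros tau Htau. rewrite PP_fact.
      assert (T ^ (2*n+2) <= tau ^ (2*n+2)) by (apply pow_incr; lra).
      assert (0 <= tau ^ (2*n)) by (apply pow_le; lra). nra.
    + specialize (HHb T ltac:(lra)). unfold HH in HHb. rewrite HPT in HHb. lra.
Qed.
End Sturm.

Section Chain.
Variables (n k : nat) (a : R).
Definition XX t := t ^ (2*n+2) / INR (n+1).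
Definition phi x := exp (- x / 2) * ly k a x.
Definition phi1 x := exp (- x / 2) * (ly1 k a x - ly k a x / 2).
Definition phi2 x := exp (- x / 2) * (ly2 k a x - ly1 k a x + ly k a x / 4).

Lemma dhalf x : is_derive (fun x => - x / 2) x (- (1/2)).
Proof. eapply dext; [ | | apply (is_derive_scal _ x (- (1/2)) _ (did x))]. intros; cbv beta; field. ring. Qed.

Lemma phi_d x : is_derive phi x (phi1 x).
Proof.
  eapply dext; [ | | apply (dmul _ _ x _ _ (dexp _ x _ (dhalf x)) (ly_d k a x))].
  intros; reflexivity. unfold phi1. cbv beta. field.
Qed.

Lemma phi1_d x : is_derive phi1 x (phi2 x).
Proof.
  eapply dext; [ | | apply (dmul _ _ x _ _ (dexp _ x _ (dhalf x))
     (dplus _ _ x _ _ (ly1_d k a x) (is_derive_scal _ x (- (1/2)) _ (ly_d k a x))))].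
  intros; unfold phi1; cbv beta; field. unfold phi2. cbv beta. field.
Qed.

Lemma N1_pos : 0 < INR (n+1).
Proof. apply lt_0_INR; lia. Qed.

Lemma XX_d t : is_derive XX t (2 * t ^ (2*n+1)).
Proof.
  eapply dext; [ | | apply (is_derive_scal _ t (/ INR (n+1)) _ (dpow (2*n+2) t))].
  intros; unfold XX; cbv beta; field; apply Rgt_not_eq, N1_pos.
  replace (pred (2*n+2)) with (2*n+1)%nat by lia.
  replace (INR (2*n+2)) with (2 * INR (n+1)) by (rewrite !plus_INR, mult_INR; simpl; ring).
  field. apply Rgt_not_eq, N1_pos.
Qed.

Definition uv t := phi (XX t).
Definition uv1 t := 2 * t ^ (2*n+1) * phi1 (XX t).
Definition uw t := t * phi (XX t).
Definition uw1 t := phi (XX t) + 2 * t ^ (2*n+2) * phi1 (XX t).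

Lemma uv_d t : is_derive uv t (uv1 t).
Proof.
  eapply dext; [ | | apply (dcomp _ _ t _ _ (phi_d (XX t)) (XX_d t))].
  intros; reflexivity. unfold uv1. ring.
Qed.

Lemma uw_d t : is_derive uw t (uw1 t).
Proof.
  eapply dext; [ | | apply (dmul _ _ t _ _ (did t) (dcomp _ _ t _ _ (phi_d (XX t)) (XX_d t)))].
  intros; reflexivity. unfold uw1. replace (2*n+2)%nat with (S (2*n+1)) by lia. simpl. ring.
Qed.

Lemma pows t : t ^ (2*n+1) = t ^ (2*n) * t /\ t ^ (2*n+2) = t ^ (2*n) * t * t /\
   t ^ (4*n+2) = t^(2*n) * t^(2*n) * t * t.
Proof.
  split. replace (2*n+1)%nat with (S (2*n)) by lia. simpl. ring.
  apply pow_split.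
Qed.

Lemma uv1_d t : a = - / INR (2*n+2) ->
  is_derive uv1 t (- PP n (INR (4*k*(n+1)+2*n+1)) t * uv t).
Proof.
  intros Ha.
  eapply dext; [ | | apply (dmul _ _ t _ _ (is_derive_scal _ t 2 _ (dpow (2*n+1) t)) (dcomp _ _ t _ _ (phi1_d (XX t)) (XX_d t)))].
  intros; reflexivity.
  pose proof (lag_ode k a (XX t)) as Hode.
  unfold uv, phi, phi1, phi2, PP in *. 
  replace (pred (2*n+1)) with (2*n)%nat by lia.
  destruct (pows t) as [A [B C]]. rewrite A, C. unfold XX in *. rewrite B in *.
  set (p := t ^ (2*n)) in *. set (e := exp (- (p * t * t / INR (n + 1)) / 2)).
  set (y := ly k a (p * t * t / INR (n + 1))) in *.
  set (y1 := ly1 k a (p * t * t / INR (n + 1))) in *.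
  set (y2 := ly2 k a (p * t * t / INR (n + 1))) in *.
  pose proof N1_pos.
  rewrite Ha in Hode.
  replace (INR (2*n+2)) with (2 * INR (n+1)) in * by (rewrite !plus_INR, mult_INR; simpl; ring).
  replace (INR (2*n+1)) with (2 * INR (n+1) - 1) by (rewrite !plus_INR, mult_INR; simpl; ring).
  assert (HE : INR (4*k*(n+1)+2*n+1) = 4 * INR k * INR (n+1) + 2 * INR (n+1) - 1) by (rewrite !plus_INR, !mult_INR, !plus_INR; simpl; ring). rewrite HE.
  set (N1 := INR (n+1)) in *.
  match goal with |- ?L = ?R => assert (L - R = 4 * p * N1 * e * ((p * t * t / N1) * y2 + (- / (2 * N1) + 1 - p * t * t / N1) * y1 + INR k * y)) end.
  { field. lra. }
  rewrite Hode in H0. lra.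
Qed.

Lemma uw1_d t : a = / INR (2*n+2) ->
  is_derive uw1 t (- PP n (INR (4*k*(n+1)+2*n+3)) t * uw t).
Proof.
  intros Ha.
  eapply dext; [ | | apply (dplus _ _ t _ _ (dcomp _ _ t _ _ (phi_d (XX t)) (XX_d t))
      (dmul _ _ t _ _ (is_derive_scal _ t 2 _ (dpow (2*n+2) t)) (dcomp _ _ t _ _ (phi1_d (XX t)) (XX_d t))))].
  intros; reflexivity.
  pose proof (lag_ode k a (XX t)) as Hode.
  unfold uw, phi, phi1, phi2, PP in *. 
  replace (pred (2*n+2)) with (2*n+1)%nat by lia.
  destruct (pows t) as [A [B C]]. rewrite A, C. unfold XX in *. rewrite B in *.
  set (p := t ^ (2*n)) in *. set (e := exp (- (p * t * t / INR (n + 1)) / 2)).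
  set (y := ly k a (p * t * t / INR (n + 1))) in *.
  set (y1 := ly1 k a (p * t * t / INR (n + 1))) in *.
  set (y2 := ly2 k a (p * t * t / INR (n + 1))) in *.
  pose proof N1_pos.
  rewrite Ha in Hode.
  replace (INR (2*n+2)) with (2 * INR (n+1)) in * by (rewrite !plus_INR, mult_INR; simpl; ring).
  assert (HE : INR (4*k*(n+1)+2*n+3) = 4 * INR k * INR (n+1) + 2 * INR (n+1) + 1) by (rewrite !plus_INR, !mult_INR, !plus_INR; simpl; ring). rewrite HE.
  set (N1 := INR (n+1)) in *.
  match goal with |- ?L = ?R => assert (L - R = 4 * p * t * N1 * e * ((p * t * t / N1) * y2 + (/ (2 * N1) + 1 - p * t * t / N1) * y1 + INR k * y)) end.
  { field. lra. }
  rewrite Hode in H0. lra.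
Qed.
End Chain.

Lemma sum_ge_term (g : nat -> R) m : (forall i, 0 <= g i) -> g m <= sum_f_R0 g m.
Proof.
  intros H. destruct m. simpl; lra. simpl. pose proof (cond_pos_sum g m H). lra.
Qed.

Lemma exp_half_pow x m : 0 <= x -> exp (- x / 2) * x ^ m <= 2 ^ m * INR (Factorial.fact m).
Proof.
  intros Hx.
  assert (H := exp_ge_taylor (x/2) m ltac:(lra)).
  assert (H2 := sum_ge_term (fun k => (x/2) ^ k / INR (Factorial.fact k)) m).
  cbv beta in H2. assert ((x / 2) ^ m / INR (Factorial.fact m) <= exp (x/2)).
  { eapply Rle_trans; [apply H2|exact H]. intros i. apply Rle_div_r. apply INR_fact_pos.
    rewrite Rmult_0_l. apply pow_le; lra. }
  pose proof (INR_fact_pos m).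
  assert (Hm : x ^ m = 2 ^ m * (x / 2) ^ m) by (rewrite <- Rpow_mult_distr; f_equal; field).
  rewrite Hm.
  assert (exp (- x / 2) * exp (x / 2) = 1) by (rewrite <- exp_plus; replace (- x / 2 + x / 2) with 0 by field; apply exp_0).
  assert (0 < exp (- x / 2)) by apply exp_pos.
  assert ((x / 2) ^ m <= INR (Factorial.fact m) * exp (x / 2)).
  { apply Rmult_le_reg_r with (/ INR (Factorial.fact m)). apply Rinv_0_lt_compat; lra.
    replace (INR (Factorial.fact m) * exp (x / 2) * / INR (Factorial.fact m)) with (exp (x/2)) by (field; lra). exact H0. }
  assert (0 < 2 ^ m) by (apply pow_lt; lra).
  apply Rle_trans with (2 ^ m * (exp (- x / 2) * (INR (Factorial.fact m) * exp (x / 2)))).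
  { rewrite <- Rmult_assoc, (Rmult_comm (exp _) (2 ^ m)), Rmult_assoc. apply Rmult_le_compat_l. lra.
    apply Rmult_le_compat_l; lra. }
  right. replace (exp (- x / 2) * (INR (Factorial.fact m) * exp (x / 2))) with (INR (Factorial.fact m) * (exp (- x / 2) * exp (x / 2))) by ring.
  rewrite H3. ring.
Qed.

Lemma exp_le1 y : y <= 0 -> exp y <= 1.
Proof. intros H. rewrite <- exp_0. destruct (Req_dec y 0). subst; lra. apply Rlt_le, exp_increasing; lra. Qed.

Lemma expoly_bound d N : exists B, forall x, 0 <= x -> exp (- x / 2) * Rabs (poly d N x) <= B.
Proof.
  induction N.
  - exists (Rabs (d O)). intros x Hx. unfold poly; simpl. rewrite Rmult_1_r.
    assert (exp (- x / 2) <= 1) by (apply exp_le1; lra).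
    pose proof (Rabs_pos (d O)). nra.
  - destruct IHN as [B HB]. exists (B + Rabs (d (S N)) * (2 ^ S N * INR (Factorial.fact (S N)))).
    intros x Hx. change (poly d (S N) x) with (poly d N x + d (S N) * x ^ S N).
    specialize (HB x Hx). pose proof (exp_half_pow x (S N) Hx).
    pose proof (exp_pos (- x / 2)). pose proof (Rabs_pos (d (S N))).
    apply Rle_trans with (exp (- x / 2) * Rabs (poly d N x) + Rabs (d (S N)) * (exp (- x / 2) * x ^ S N)).
    + apply Rle_trans with (exp (- x / 2) * (Rabs (poly d N x) + Rabs (d (S N) * x ^ S N))).
      apply Rmult_le_compat_l. lra. apply Rabs_triang.
      rewrite Rabs_mult, (Rabs_right (x ^ S N)) by (apply Rle_ge, pow_le; lra). right; ring.
    + apply Rplus_le_compat. lra. apply Rmult_le_compat_l; lra.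
Qed.

Lemma spow s j m : 0 <= s -> (j <= m)%nat -> s ^ j <= 1 + s ^ m.
Proof.
  intros Hs Hjm. destruct (Rle_or_lt s 1).
  - assert (s ^ j <= 1) by (rewrite <- (pow1 j); apply pow_incr; lra). pose proof (pow_le s m Hs). lra.
  - assert (s ^ j <= s ^ m) by (apply Rle_pow; [lra|lia]). lra.
Qed.

Lemma pow_even_opp t m : (- t) ^ (2 * m) = t ^ (2 * m).
Proof. rewrite !pow_mult. f_equal. ring. Qed.

Section Improper.
Variables (f : R -> R) (M : R).
Hypothesis Hc : forall t, continuous f t.
Hypothesis Hp : forall t, 0 <= f t.
Hypothesis Hb : forall t, f t * (1 + t ^ 2) <= M.

Let F x := RInt f 0 x.

Lemma exR x y : ex_RInt f x y.
Proof. apply (ex_RInt_continuous (V:=R_CompleteNormedModule)). intros; apply Hc. Qed.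

Lemma F_diff x y : F y - F x = RInt f x y.
Proof.
  unfold F. rewrite <- (RInt_Chasles f 0 x y) by apply exR. unfold plus; simpl. ring.
Qed.

Lemma F_mono x y : x <= y -> F x <= F y.
Proof. intros H. pose proof (F_diff x y). pose proof (RInt_ge_0 f x y H (exR x y) (fun t _ => Hp t)). lra. Qed.

Lemma atan_int x y : x <= y -> RInt f x y <= M * (atan y - atan x).
Proof.
  intros Hxy.
  assert (Hg : is_RInt (fun t => M * / (1 + t ^ 2)) x y (M * (atan y - atan x))).
  { assert (H := is_RInt_derive (fun t => M * atan t) (fun t => M * / (1 + t ^ 2)) x y).
    replace (M * (atan y - atan x)) with (minus (M * atan y) (M * atan x)) by (unfold minus, plus, opp; simpl; ring).
    apply H.
    - intros t _. eapply dext; [ | | apply (is_derive_scal _ t M _ (is_derive_atan t))]. intros; reflexivity. unfold Rsqr; replace (t ^ 2) with (t * t) by ring; reflexivity.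
    - intros t _. apply (ex_derive_continuous (fun t => M * / (1 + t ^ 2))). auto_derive.
      pose proof (pow2_ge_0 t). simpl in *. nra. }
  replace (M * (atan y - atan x)) with (RInt (fun t => M * / (1 + t ^ 2)) x y) by (apply is_RInt_unique; auto).
  apply RInt_le; auto. apply exR. eexists; eauto.
  intros t _. specialize (Hb t). pose proof (pow2_ge_0 t).
  apply Rmult_le_reg_r with (1 + t ^ 2). lra. field_simplify; lra.
Qed.

Lemma M_pos : 0 <= M.
Proof. specialize (Hb 0). specialize (Hp 0). simpl in Hb. nra. Qed.

Lemma F_bound x : Rabs (F x) <= 2 * M * 2.
Proof.
  pose proof M_pos. pose proof PI_4. pose proof (atan_bound x). pose proof atan_0.
  destruct (Rle_or_lt 0 x).
  - pose proof (atan_int 0 x H3). assert (F 0 = 0) by (unfold F; apply (RInt_point (V:=R_CompleteNormedModule))).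
    pose proof (F_diff 0 x). pose proof (F_mono 0 x H3).
    rewrite Rabs_right by lra. nra.
  - pose proof (atan_int x 0 ltac:(lra)). assert (F 0 = 0) by (unfold F; apply (RInt_point (V:=R_CompleteNormedModule))).
    pose proof (F_diff x 0). pose proof (F_mono x 0 ltac:(lra)).
    rewrite Rabs_left1 by lra. nra.
Qed.

Lemma ballR l e y : Rabs (y - l) < e -> ball l e y.
Proof. intros H. unfold ball; simpl; unfold AbsRing_ball, abs, minus, plus, opp; simpl. auto. Qed.

Lemma improper_ge : exists l, RInt_gen f (Rbar_locally m_infty) (Rbar_locally p_infty) = l /\
   forall a b, a <= b -> RInt f a b <= l.
Proof.
  assert (HB := F_bound).
  destruct (completeness (fun y => exists x, y = F x)) as [lb Hlb].
  { exists (4 * M). intros y [x ->]. specialize (HB x). apply Rabs_le_between in HB. lra. }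
  { exists (F 0); eauto. }
  destruct (completeness (fun y => exists x, y = - F x)) as [la' Hla].
  { exists (4 * M). intros y [x ->]. specialize (HB x). apply Rabs_le_between in HB. lra. }
  { exists (- F 0); eauto. }
  assert (Hub : forall x, F x <= lb) by (intros x; apply Hlb; eauto).
  assert (Hlw : forall x, - la' <= F x) by (intros x; assert (- F x <= la') by (apply Hla; eauto); lra).
  assert (Ex1 : forall eps : posreal, exists x0, lb - eps < F x0).
  { intros eps. apply NNPP. intros Hn.
    assert (lb <= lb - eps). { apply Hlb. intros y [x ->]. destruct (Rle_or_lt (F x) (lb - eps)); auto. exfalso; apply Hn; eauto. }
    destruct eps; simpl in *; lra. }
  assert (Ex2 : forall eps : posreal, exists x0, F x0 < - la' + eps).
  { intros eps. apply NNPP. intros Hn.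
    assert (la' <= la' - eps). { apply Hla. intros y [x ->]. destruct (Rle_or_lt (- la' + eps) (F x)). lra. exfalso; apply Hn; eauto. }
    destruct eps; simpl in *; lra. }
  assert (Llb : filterlim F (Rbar_locally p_infty) (locally lb)).
  { apply filterlim_locally. intros eps. destruct (Ex1 eps) as [x0 Hx0].
    exists x0. intros x Hx. apply ballR. pose proof (F_mono x0 x ltac:(lra)). pose proof (Hub x).
    rewrite Rabs_left1 by lra. lra. }
  assert (Lla : filterlim F (Rbar_locally m_infty) (locally (- la'))).
  { apply filterlim_locally. intros eps. destruct (Ex2 eps) as [x0 Hx0].
    exists x0. intros x Hx. apply ballR. pose proof (F_mono x x0 ltac:(lra)). pose proof (Hlw x).
    rewrite Rabs_right by lra. lra. }
  assert (HD : forall x, is_derive F x (f x)).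
  { intros x. apply (is_derive_RInt f F 0 x). 2: apply Hc.
    apply filter_forall. intros b. apply (RInt_correct (V:=R_CompleteNormedModule)). apply exR. }
  assert (Hgen : is_RInt_gen f (Rbar_locally m_infty) (Rbar_locally p_infty) (lb - - la')).
  { apply (is_RInt_gen_ext (Derive F)).
    apply Filter_prod with (fun _ => True) (fun _ => True). apply filter_true. apply filter_true.
    intros; simpl. apply is_derive_unique, HD.
    apply is_RInt_gen_Derive.
    apply Filter_prod with (fun _ => True) (fun _ => True). apply filter_true. apply filter_true.
    intros; eexists; apply HD.
    apply Filter_prod with (fun _ => True) (fun _ => True). apply filter_true. apply filter_true.
    intros. apply (continuous_ext f). intros; symmetry; apply is_derive_unique, HD. apply Hc.
    auto. auto. }
  exists (lb - - la'). split.
  - apply is_RInt_gen_unique; auto.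
  - intros a b Hab. rewrite <- F_diff. pose proof (Hub b). pose proof (Hlw a). lra.
Qed.
End Improper.

Lemma exp_mono x y : x <= y -> exp x <= exp y.
Proof. intros H. destruct (Req_dec x y). subst; lra. apply Rlt_le, exp_increasing; lra. Qed.

Lemma pow_S_le s m : 0 <= s <= 1 -> s ^ (S m) <= s.
Proof. intros H. simpl. assert (s ^ m <= 1) by (rewrite <- (pow1 m); apply pow_incr; lra). nra. Qed.

Lemma XX_nonneg n t : 0 <= XX n t.
Proof.
  unfold XX. apply Rle_div_r. apply lt_0_INR; lia. rewrite Rmult_0_l.
  replace (2*n+2)%nat with (2*(n+1))%nat by lia. rewrite pow_mult. apply pow_le, pow2_ge_0.
Qed.

Section Main.
Variables (n k : nat) (a : R).
Hypothesis Ha : -1/2 <= a.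
Let K := INR k + 1.
Let N1 := INR (n+1).
Let c0 := lc k a 0.

Definition ss := Rpower (/ (6 * (INR k + 1))) (/ INR (2*n+2)).

Lemma K_ge1 : 1 <= K.
Proof. unfold K. pose proof (pos_INR k). lra. Qed.
Lemma N1_ge1 : 1 <= N1.
Proof. unfold N1. rewrite plus_INR. simpl. pose proof (pos_INR n). lra. Qed.
Lemma c0_pos : 0 < c0.
Proof. apply lc0_pos; auto. Qed.

Lemma ss_props : 0 < ss /\ ss ^ (2*n+2) = / (6 * K) /\ ss <= 1.
Proof.
  pose proof K_ge1.
  assert (H1 : 0 < ss) by apply exp_pos.
  assert (H2 : ss ^ (2*n+2) = / (6 * K)) by (apply pow_Rpower_inv; [apply Rinv_0_lt_compat; lra | lia]).
  split; auto. split; auto.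
  destruct (Rle_or_lt ss 1); auto.
  assert (1 < ss ^ (2*n+2)) by (apply Rlt_pow_R1; [lra|lia]).
  assert (/ (6 * K) <= 1/6). { apply Rle_div_r in H || idtac. unfold Rdiv. rewrite Rmult_1_l. apply Rinv_le_contravar; lra. }
  lra.
Qed.

Lemma XX_small t : 0 <= t <= ss -> 0 <= XX n t /\ 2 * K * XX n t <= 1/3 /\ XX n t <= 1.
Proof.
  intros Ht. destruct ss_props as [H1 [H2 H3]]. pose proof K_ge1. pose proof N1_ge1.
  pose proof (XX_nonneg n t).
  assert (t ^ (2*n+2) <= / (6 * K)) by (rewrite <- H2; apply pow_incr; lra).
  assert (XX n t <= t ^ (2*n+2)). { unfold XX. fold N1. apply Rle_div_l. lra.
    assert (0 <= t ^ (2*n+2)) by (apply pow_le; lra). nra. }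
  assert (2 * K * / (6 * K) = 1/3) by (field; lra).
  assert (/ (6 * K) <= 1) by (rewrite <- Rinv_1; apply Rinv_le_contravar; lra).
  repeat split; auto. nra. lra.
Qed.

Lemma phi_small x : 0 <= x -> 2 * K * x <= 1/3 -> x <= 1 ->
  Rabs (phi k a x) <= 3/2 * c0 /\ c0 ^ 2 / 12 <= (phi k a x) ^ 2 /\ Rabs (phi1 k a x) <= 7 * K * c0.
Proof.
  intros H0 H1 H2. pose proof c0_pos. pose proof K_ge1.
  pose proof (ly_close k a Ha x H0 H1) as Hc. fold K c0 in Hc. apply Rabs_le_between in Hc.
  pose proof (ly1_bound k a Ha x H0 H1) as Hd. fold K c0 in Hd.
  assert (He1 : exp (- x / 2) <= 1) by (apply exp_le1; lra).
  assert (He0 : 0 < exp (- x / 2)) by apply exp_pos.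
  assert (He2 : 1/3 <= exp (- x / 2) ^ 2).
  { simpl. rewrite Rmult_1_r, <- exp_plus. replace (- x / 2 + - x / 2) with (- x) by field.
    apply Rle_trans with (exp (-1)).
    assert (exp (-1) * exp 1 = 1) by (rewrite <- exp_plus; replace (-1+1) with 0 by ring; apply exp_0).
    pose proof exp_le_3. pose proof (exp_pos 1). pose proof (exp_pos (-1)). nra. apply exp_mono; lra. }
  unfold phi, phi1. split; [|split].
  - rewrite Rabs_mult, Rabs_right by lra. rewrite Rabs_right by lra. nra.
  - rewrite Rpow_mult_distr. assert (c0 ^ 2 / 4 <= ly k a x ^ 2) by (simpl; nra). nra.
  - rewrite Rabs_mult, Rabs_right by lra.
    apply Rle_trans with (1 * (Rabs (ly1 k a x) + Rabs (ly k a x) / 2)).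
    apply Rmult_le_compat; try lra. apply Rabs_pos.
    eapply Rle_trans. apply Rabs_triang. rewrite Rabs_Ropp. unfold Rdiv. rewrite Rabs_mult.
    rewrite (Rabs_right (/ 2)) by lra. lra.
    rewrite (Rabs_right (ly k a x)) by lra. assert (c0 <= K * c0) by nra. lra.
Qed.

Lemma pow_le1 t m : 0 <= t <= 1 -> t ^ m <= 1.
Proof. intros H. rewrite <- (pow1 m). apply pow_incr; lra. Qed.

Lemma u_small t : 0 <= t <= ss ->
  Rabs (uv n k a t) <= 2 * c0 /\ Rabs (uw n k a t) <= 2 * c0 /\
  Rabs (uv1 n k a t) <= 16 * K * c0 /\ Rabs (uw1 n k a t) <= 16 * K * c0.
Proof.
  intros Ht. destruct ss_props as [H1 [H2 H3]]. pose proof c0_pos. pose proof K_ge1.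
  destruct (XX_small t Ht) as [X1 [X2 X3]].
  destruct (phi_small (XX n t) X1 X2 X3) as [P1 [P2 P3]].
  assert (T1 : 0 <= t ^ (2*n+1) <= 1) by (split; [apply pow_le; lra | apply pow_le1; lra]).
  assert (T2 : 0 <= t ^ (2*n+2) <= 1) by (split; [apply pow_le; lra | apply pow_le1; lra]).
  pose proof (Rabs_pos (phi1 k a (XX n t))). pose proof (Rabs_pos (phi k a (XX n t))).
  unfold uv, uw, uv1, uw1. repeat split.
  - lra.
  - rewrite Rabs_mult, (Rabs_right t) by lra. nra.
  - rewrite !Rabs_mult, (Rabs_right 2) by lra. rewrite (Rabs_right (t ^ _)) by lra. nra.
  - eapply Rle_trans. apply Rabs_triang. rewrite !Rabs_mult, (Rabs_right 2) by lra. rewrite (Rabs_right (t ^ _)) by lra.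
    assert (c0 <= K * c0) by nra. nra.
Qed.

Lemma Ybound : exists B, forall t, (1 + t ^ (2*n+2)) * Rabs (phi k a (XX n t)) <= B.
Proof.
  destruct (expoly_bound (lc k a) (S (S k))) as [B1 HB1].
  destruct (expoly_bound (shiftc (lc k a)) (S (S (S k)))) as [B2 HB2].
  exists (B1 + N1 * B2). intros t. pose proof (XX_nonneg n t) as HX. pose proof N1_ge1.
  assert (HY : 1 + t ^ (2*n+2) = 1 + N1 * XX n t) by (unfold XX; fold N1; field; lra).
  rewrite HY. unfold phi. rewrite Rabs_mult, (Rabs_right (exp _)) by (apply Rle_ge, Rlt_le, exp_pos).
  specialize (HB1 _ HX). specialize (HB2 _ HX). rewrite <- poly_shift in HB2.
  unfold ly. rewrite Rabs_mult, (Rabs_right (XX n t)) in HB2 by lra.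
  pose proof (exp_pos (- XX n t / 2)). pose proof (Rabs_pos (poly (lc k a) (S (S k)) (XX n t))).
  assert (0 <= N1 * (exp (- XX n t / 2) * (XX n t * Rabs (poly (lc k a) (S (S k)) (XX n t)))) <= N1 * B2).
  { split. apply Rmult_le_pos. lra. apply Rmult_le_pos. lra. apply Rmult_le_pos; lra. apply Rmult_le_compat_l; lra. }
  nra.
Qed.

Lemma pow_anti s p q : 0 <= s <= 1 -> (p <= q)%nat -> s ^ q <= s ^ p.
Proof.
  intros Hs Hpq. replace q with (p + (q - p))%nat by lia. rewrite pow_add.
  assert (s ^ (q - p) <= 1) by (apply pow_le1; lra). assert (0 <= s ^ p) by (apply pow_le; lra). nra.
Qed.

Lemma norm_lower (u0 : R -> R) (j : nat) : (j <= 1)%nat ->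
  (forall t, u0 t = t ^ j * phi k a (XX n t)) ->
  c0 ^ 2 / (432 * (2 * INR n + 3) * K ^ 2) <=
  RInt_gen (fun t => (t ^ n * u0 t) ^ 2) (Rbar_locally m_infty) (Rbar_locally p_infty).
Proof.
  intros Hj Hu0. destruct Ybound as [B HB].
  set (f := fun t => (t ^ n * u0 t) ^ 2).
  assert (Hf : forall t, f t = (t * t) ^ (n + j) * (phi k a (XX n t)) ^ 2).
  { intros t. unfold f. rewrite Hu0, pow_add, !Rpow_mult_distr. simpl. ring. }
  assert (Hc : forall t, continuous f t).
  { intros t. apply (continuous_ext (fun t => (t ^ n * (t ^ j * phi k a (XX n t))) ^ 2)).
    intros; unfold f; rewrite Hu0; reflexivity.
    apply (ex_derive_continuous (fun t => (t ^ n * (t ^ j * phi k a (XX n t))) ^ 2)). eexists.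
    apply (is_derive_pow (fun t => t ^ n * (t ^ j * phi k a (XX n t))) 2 t).
    apply (dmul _ _ t _ _ (dpow n t) (dmul _ _ t _ _ (dpow j t) (dcomp _ _ t _ _ (phi_d k a (XX n t)) (XX_d n t)))). }
  assert (Hp : forall t, 0 <= f t) by (intros; unfold f; apply pow2_ge_0).
  assert (Hb : forall t, f t * (1 + t ^ 2) <= 2 * B ^ 2).
  { intros t. rewrite Hf. set (s := t * t). assert (Hs : 0 <= s) by (unfold s; nra).
    assert (HY : 1 + t ^ (2*n+2) = 1 + s ^ (n+1)) by (unfold s; rewrite Rpow_mult_distr, <- pow_add; f_equal; f_equal; lia).
    specialize (HB t). rewrite HY in HB.
    replace (t ^ 2) with s by (unfold s; ring).
    pose proof (spow s (n+j) (n+1) Hs ltac:(lia)). pose proof (spow s 1 (n+1) Hs ltac:(lia)).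
    set (Y := 1 + s ^ (n+1)) in *. set (p := phi k a (XX n t)) in *.
    assert (0 <= s ^ (n+j)) by (apply pow_le; lra). assert (0 <= s ^ (n+1)) by (apply pow_le; lra).
    assert (0 <= Y * Rabs p) by (apply Rmult_le_pos; [unfold Y; lra| apply Rabs_pos]).
    assert ((Y * Rabs p) ^ 2 <= B ^ 2) by (apply pow_incr; lra).
    rewrite Rpow_mult_distr in H4. rewrite <- (pow2_abs p).
    simpl in *. assert (Hq : 0 <= Rabs p * Rabs p) by (pose proof (Rabs_pos p); nra).
    assert (1 + s <= 2 * Y) by (unfold Y in *; lra).
    assert (s ^ (n + j) * (Rabs p * Rabs p) <= Y * (Rabs p * Rabs p)) by (apply Rmult_le_compat_r; lra).
    assert (s ^ (n + j) * (Rabs p * Rabs p) * (1 + s) <= Y * (Rabs p * Rabs p) * (2 * Y)).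
    { apply Rmult_le_compat; try lra. apply Rmult_le_pos; lra. }
    rewrite !Rmult_1_r in *. nra. }
  destruct (improper_ge f (2 * B ^ 2) Hc Hp Hb) as [l [Hl Hle]].
  rewrite Hl.
  destruct ss_props as [S1 [S2 S3]]. pose proof K_ge1. pose proof c0_pos.
  specialize (Hle 0 ss ltac:(lra)).
  set (G := fun t => c0 ^ 2 / 12 * t ^ (2*n+3) / (2 * INR n + 3)).
  set (g := fun t => c0 ^ 2 / 12 * t ^ (2*n+2)).
  assert (Hn3 : 0 < 2 * INR n + 3) by (pose proof (pos_INR n); lra).
  assert (Hg : is_RInt g 0 ss (G ss - G 0)).
  { assert (HH0 := is_RInt_derive G g 0 ss). apply HH0.
    - intros x _. unfold G, g. eapply dext; [ | | apply (is_derive_scal _ x (c0 ^ 2 / 12 / (2 * INR n + 3)) _ (dpow (2*n+3) x))].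
      intros; cbv beta; field; lra. replace (pred (2*n+3)) with (2*n+2)%nat by lia.
      replace (INR (2*n+3)) with (2 * INR n + 3) by (rewrite !plus_INR, mult_INR; simpl; ring). field. lra.
    - intros x _. apply (ex_derive_continuous g). eexists. unfold g. apply is_derive_scal, dpow. }
  assert (HG : G ss - G 0 = c0 ^ 2 / 12 * ss ^ (2*n+3) / (2 * INR n + 3)).
  { unfold G. replace (0 ^ (2*n+3)) with 0 by (rewrite pow_i; [reflexivity|lia]). field. lra. }
  assert (Hgf : RInt g 0 ss <= RInt f 0 ss).
  { apply RInt_le. lra. eexists; eauto. apply (ex_RInt_continuous (V:=R_CompleteNormedModule)). intros; apply Hc.
    intros t Ht. rewrite Hf. unfold g.
    destruct (XX_small t ltac:(lra)) as [X1 [X2 X3]].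
    destruct (phi_small (XX n t) X1 X2 X3) as [P1 [P2 P3]].
    assert (t ^ (2*n+2) = (t * t) ^ (n+1)) by (rewrite Rpow_mult_distr, <- pow_add; f_equal; lia).
    rewrite H1. assert (0 <= t * t <= 1) by (split; nra).
    pose proof (pow_anti (t*t) (n+j) (n+1) H2 ltac:(lia)).
    assert (0 <= (t * t) ^ (n+1)) by (apply pow_le; lra).
    assert (0 <= c0 ^ 2 / 12) by (apply Rle_div_r; [lra| rewrite Rmult_0_l; apply pow2_ge_0]).
    nra. }
  rewrite (is_RInt_unique g 0 ss _ Hg), HG in Hgf.
  assert (Hss : / (6 * K) * / (6 * K) <= ss ^ (2*n+3)).
  { replace (2*n+3)%nat with (S (2*n+2)) by lia. rewrite <- tech_pow_Rmult, S2.
    pose proof (pow_S_le ss (2*n+1) ltac:(lra)). replace (S (2*n+1)) with (2*n+2)%nat in H1 by lia. rewrite S2 in H1.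
    assert (0 < / (6 * K)) by (apply Rinv_0_lt_compat; lra). nra. }
  apply Rle_trans with (c0 ^ 2 / 12 * ss ^ (2 * n + 3) / (2 * INR n + 3)); [|lra].
  replace (c0 ^ 2 / (432 * (2 * INR n + 3) * K ^ 2)) with (c0 ^ 2 / 12 * (/ (6 * K) * / (6 * K)) / (2 * INR n + 3)) by (field; lra).
  unfold Rdiv. apply Rmult_le_compat_r. apply Rlt_le, Rinv_0_lt_compat; lra.
  apply Rmult_le_compat_l; auto. assert (0 <= c0 ^ 2) by apply pow2_ge_0. lra.
Qed.
End Main.

Lemma assemble n (u u1 : R -> R) (Eo E K c c0 s : R) :
  1 <= K -> K <= E -> K <= Eo -> Eo <= 3 * E -> 0 < c0 ->
  0 < s -> s ^ (2*n+2) = / (6 * K) -> s <= 1 ->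
  (forall t, is_derive u t (u1 t)) -> (forall t, is_derive u1 t (- PP n Eo t * u t)) ->
  (exists B, forall t, 0 <= t -> Rabs (u t) <= B) ->
  (forall t, 0 <= t <= s -> Rabs (u t) <= 2 * c0 /\ Rabs (u1 t) <= 16 * K * c0) ->
  (c * c0) ^ 2 <= 432 * (2 * INR n + 3) * K ^ 2 ->
  forall t, 0 <= t -> (c * u1 t) ^ 2 <= 40000 * (432 * (2 * INR n + 3)) * E ^ 6.
Proof.
  intros HK HKE HKEo HEo Hc0 Hs Hs2 Hs1 Hu Hu1 Hb Hsm Hcc t Ht.
  set (al := 432 * (2 * INR n + 3)) in *.
  assert (Hal : 0 < al) by (unfold al; pose proof (pos_INR n); lra).
  assert (HE : 1 <= E) by lra.
  assert (HK4 : K ^ 4 <= E ^ 6).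
  { apply Rle_trans with (E ^ 4). apply pow_incr; lra. apply Rle_pow; [lra|lia]. }
  assert (HK2 : 0 < K ^ 2) by (apply pow_lt; lra).
  assert (Hc2 : c ^ 2 * c0 ^ 2 <= al * K ^ 2) by (rewrite <- Rpow_mult_distr; auto).
  assert (Hc2p : 0 <= c ^ 2) by apply pow2_ge_0.
  rewrite Rpow_mult_distr.
  destruct (Rle_or_lt t s) as [Hts|Hts].
  - destruct (Hsm t ltac:(lra)) as [_ H1].
    assert (u1 t ^ 2 <= (16 * K * c0) ^ 2).
    { rewrite <- (pow2_abs (u1 t)). apply pow_incr. split; [apply Rabs_pos|auto]. }
    apply Rle_trans with (c ^ 2 * (16 * K * c0) ^ 2). apply Rmult_le_compat_l; auto.
    replace (c ^ 2 * (16 * K * c0) ^ 2) with (256 * K ^ 2 * (c ^ 2 * c0 ^ 2)) by ring.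
    apply Rle_trans with (256 * K ^ 2 * (al * K ^ 2)). apply Rmult_le_compat_l; [nra|auto].
    replace (256 * K ^ 2 * (al * K ^ 2)) with (256 * al * K ^ 4) by ring.
    apply Rle_trans with (256 * al * E ^ 6). apply Rmult_le_compat_l; [lra|auto]. nra.
  - assert (Hs3 : s ^ (2*n+2) <= 1/3).
    { rewrite Hs2. apply Rle_trans with (/ 6). apply Rinv_le_contravar; lra. lra. }
    pose proof (sturm_main n Eo u u1 ltac:(lra) Hu Hu1 s Hs Hs3 Hb t ltac:(lra)) as HM.
    assert (HPs : 5 * Eo / (36 * K) <= PP n Eo s).
    { rewrite PP_fact, Hs2. pose proof (pow_anti s (2*n) (2*n+2) ltac:(lra) ltac:(lia)). rewrite Hs2 in H.
      assert (/ (6 * K) <= 1/6) by (apply Rle_trans with (/6); [apply Rinv_le_contravar; lra | lra]).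
      assert (0 < / (6 * K)) by (apply Rinv_0_lt_compat; lra).
      apply Rle_trans with (/ (6 * K) * (Eo - / (6 * K))).
      replace (5 * Eo / (36 * K)) with (/ (6 * K) * (5 * Eo / 6)) by (field; lra).
      apply Rmult_le_compat_l; lra. apply Rmult_le_compat_r; lra. }
    assert (HPs2 : 0 < PP n Eo s).
    { eapply Rlt_le_trans; [|exact HPs]. apply Rdiv_lt_0_compat; lra. }
    destruct (Hsm s ltac:(lra)) as [H0 H1].
    assert (A1 : u1 s * u1 s <= 256 * K ^ 2 * c0 ^ 2).
    { rewrite <- Rabs_mult_self || idtac. pose proof (Rabs_pos (u1 s)).
      assert (Rabs (u1 s) * Rabs (u1 s) = u1 s * u1 s) by (rewrite <- Rabs_mult; apply Rabs_right; nra).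
      assert (0 <= 16 * K * c0) by nra.
      assert (Rabs (u1 s) * Rabs (u1 s) <= (16 * K * c0) * (16 * K * c0)) by (apply Rmult_le_compat; lra).
      simpl. nra. }
    assert (A0 : u s * u s <= 4 * K ^ 2 * c0 ^ 2).
    { pose proof (Rabs_pos (u s)).
      assert (Rabs (u s) * Rabs (u s) = u s * u s) by (rewrite <- Rabs_mult; apply Rabs_right; nra).
      assert (Rabs (u s) * Rabs (u s) <= (2 * c0) * (2 * c0)) by (apply Rmult_le_compat; lra).
      assert (1 <= K ^ 2) by (simpl; nra). assert (0 <= c0 ^ 2) by apply pow2_ge_0.
      assert (c0 ^ 2 <= K ^ 2 * c0 ^ 2) by nra. simpl in *. nra. }
    assert (A2 : u1 s * u1 s / PP n Eo s <= 8 * (256 * K ^ 2 * c0 ^ 2)).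
    { apply Rle_div_l. auto. assert (0 <= u1 s * u1 s) by nra.
      assert (1 <= 8 * PP n Eo s). { assert (5 / 36 <= 5 * Eo / (36 * K)).
        { assert (5 * Eo / (36 * K) = 5/36 * (Eo / K)) by (field; lra). assert (1 <= Eo / K). { apply (Rmult_le_reg_r K); [lra|]. unfold Rdiv; rewrite Rmult_assoc, Rinv_l by lra; lra. } lra. } lra. }
      assert (0 <= 256 * K ^ 2 * c0 ^ 2) by (apply Rmult_le_pos; [nra| apply pow2_ge_0]). nra. }
    assert (HEo2 : Eo ^ 2 <= 9 * E ^ 2) by (simpl; nra).
    assert (Hu1t : u1 t ^ 2 <= 36936 * E ^ 2 * K ^ 2 * c0 ^ 2).
    { replace (u1 t ^ 2) with (u1 t * u1 t) by ring.
      eapply Rle_trans; [exact HM|].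
      assert (0 <= K ^ 2 * c0 ^ 2) by (apply Rmult_le_pos; apply pow2_ge_0).
      apply Rle_trans with (2 * (9 * E ^ 2) * (2052 * (K ^ 2 * c0 ^ 2))).
      apply Rmult_le_compat. nra. 
      assert (0 <= u1 s * u1 s / PP n Eo s) by (apply Rle_div_r; [lra| rewrite Rmult_0_l; nra]). nra.
      lra. lra. right; ring. }
    apply Rle_trans with (c ^ 2 * (36936 * E ^ 2 * K ^ 2 * c0 ^ 2)). apply Rmult_le_compat_l; auto.
    replace (c ^ 2 * (36936 * E ^ 2 * K ^ 2 * c0 ^ 2)) with (36936 * E ^ 2 * K ^ 2 * (c ^ 2 * c0 ^ 2)) by ring.
    apply Rle_trans with (36936 * E ^ 2 * K ^ 2 * (al * K ^ 2)).
    apply Rmult_le_compat_l; auto. assert (0 <= E ^ 2) by apply pow2_ge_0. nra.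
    replace (36936 * E ^ 2 * K ^ 2 * (al * K ^ 2)) with (36936 * al * (E ^ 2 * K ^ 4)) by ring.
    assert (E ^ 2 * K ^ 4 <= E ^ 6).
    { replace (E ^ 6) with (E ^ 2 * E ^ 4) by ring. apply Rmult_le_compat_l. apply pow2_ge_0. apply pow_incr; lra. }
    nra.
Qed.

Lemma INR2n2 n : INR (2*n+2) = 2 * INR (n+1).
Proof. rewrite !plus_INR, mult_INR. simpl. ring. Qed.

Lemma v0_eq n k t : v0 n k t = uv n k (- / INR (2*n+2)) t.
Proof.
  unfold v0, uv, phi, XX. rewrite ly_lag. f_equal. f_equal. rewrite INR2n2.
  assert (0 < INR (n+1)) by (apply lt_0_INR; lia). field. lra.
Qed.

Lemma w0_eq n k t : w0 n k t = uw n k (/ INR (2*n+2)) t.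
Proof.
  unfold w0, uw, phi, XX. rewrite ly_lag.
  replace (- t ^ (2 * n + 2) / INR (2 * n + 2)) with (- (t ^ (2 * n + 2) / INR (n + 1)) / 2).
  ring. rewrite INR2n2. assert (0 < INR (n+1)) by (apply lt_0_INR; lia). field. lra.
Qed.

Lemma XX_opp n t : XX n (- t) = XX n t.
Proof. unfold XX. replace (2*n+2)%nat with (2*(n+1))%nat by lia. rewrite pow_even_opp. reflexivity. Qed.

Lemma uv1_opp n k a t : uv1 n k a (- t) = - uv1 n k a t.
Proof.
  unfold uv1. rewrite XX_opp. replace (2*n+1)%nat with (S (2*n)) by lia. rewrite <- !tech_pow_Rmult.
  rewrite pow_even_opp. ring.
Qed.

Lemma uw1_opp n k a t : uw1 n k a (- t) = uw1 n k a t.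
Proof.
  unfold uw1. rewrite XX_opp. replace (2*n+2)%nat with (2*(n+1))%nat by lia. rewrite pow_even_opp. ring.
Qed.

Definition DD n := 40000 * (432 * (2 * INR n + 3)).

Lemma DD_ge1 n : 1 <= DD n.
Proof. unfold DD. pose proof (pos_INR n). lra. Qed.

Lemma sq_to_abs x D E : 1 <= D -> 1 <= E -> x ^ 2 <= D * E ^ 6 -> Rabs x <= D * E ^ 3.
Proof.
  intros HD HE H. assert (0 < E ^ 3) by (apply pow_lt; lra).
  assert (D * E ^ 6 <= (D * E ^ 3) ^ 2).
  { replace ((D * E ^ 3) ^ 2) with (D * D * E ^ 6) by ring. assert (0 < E ^ 6) by (apply pow_lt; lra). nra. }
  apply Rsqr_le_abs_1 in H0 || idtac.
  rewrite <- (Rabs_right (D * E ^ 3)) by nra. apply Rsqr_le_abs_0. unfold Rsqr. simpl in *. nra.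
Qed.

Lemma K_le_E n k : INR k + 1 <= Ek n k.
Proof. unfold Ek. rewrite <- S_INR. apply le_INR. nia. Qed.

Lemma norm_c0 (N2 c0 L : R) : 0 < L -> 0 < c0 -> c0 ^ 2 / L <= N2 -> (/ sqrt N2 * c0) ^ 2 <= L.
Proof.
  intros HL Hc0 H.
  assert (Hp : 0 < c0 ^ 2 / L) by (apply Rdiv_lt_0_compat; [apply pow_lt|]; lra).
  assert (HN : 0 < N2) by lra.
  rewrite Rpow_mult_distr. rewrite pow_inv. replace (sqrt N2 ^ 2) with N2 by (simpl; rewrite Rmult_1_r, sqrt_sqrt; lra).
  apply Rmult_le_reg_l with N2; auto. rewrite <- Rmult_assoc, Rinv_r by lra.
  apply Rmult_le_reg_r with (/ L). apply Rinv_0_lt_compat; lra.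
  replace (N2 * L * / L) with N2 by (field; lra). lra.
Qed.

Lemma norm_c (u0 : R -> R) n c0 L : 0 < L -> 0 <= c0 ->
  c0 ^ 2 / L <= RInt_gen (fun t => (t ^ n * u0 t) ^ 2) (Rbar_locally m_infty) (Rbar_locally p_infty) ->
  0 < c0 ->
  (/ wL2norm n u0 * c0) ^ 2 <= L.
Proof. intros HL _ H Hc0. unfold wL2norm. apply norm_c0; auto. Qed.

Lemma v_bound n k t : Rabs (Derive (v n k) t) <= DD n * Ek n k ^ 3.
Proof.
  set (a := - / INR (2*n+2)).
  assert (Ha : -1/2 <= a).
  { unfold a. rewrite INR2n2. assert (1 <= INR (n+1)) by (rewrite plus_INR; simpl; pose proof (pos_INR n); lra).
    assert (/ (2 * INR (n+1)) <= / 2) by (apply Rinv_le_contravar; lra). lra. }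
  pose proof (K_le_E n k) as HKE. set (E := Ek n k) in *. set (K := INR k + 1) in *.
  assert (HK : 1 <= K) by (unfold K; pose proof (pos_INR k); lra).
  pose proof (lc0_pos k a Ha) as Hc0. set (c0 := lc k a 0) in *.
  assert (Hcc : (c_const n k * c0) ^ 2 <= 432 * (2 * INR n + 3) * K ^ 2).
  { unfold c_const. apply norm_c; try lra.
    - apply Rmult_lt_0_compat. pose proof (pos_INR n); lra. apply pow_lt; lra.
    - apply (norm_lower n k a Ha (v0 n k) 0). lia. intros t0. rewrite v0_eq. unfold uv, a. rewrite pow_O. ring. }
  set (c := c_const n k) in *.
  assert (HD : forall t, is_derive (v n k) t (c * uv1 n k a t)).
  { intros t0. eapply dext; [ | | apply (is_derive_scal _ t0 c _ (uv_d n k a t0))].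
    intros; unfold v; rewrite v0_eq; reflexivity. reflexivity. }
  rewrite (is_derive_unique _ _ _ (HD t)).
  destruct (ss_props n k) as [S1 [S2 S3]].
  assert (HA := assemble n (uv n k a) (uv1 n k a) E E K c c0 (ss n k) HK HKE HKE ltac:(lra) Hc0 S1 S2 S3
    (uv_d n k a) (fun t => uv1_d n k a t eq_refl)).
  assert (Hb : exists B, forall t, 0 <= t -> Rabs (uv n k a t) <= B).
  { destruct (Ybound n k a) as [B HB]. exists B. intros t0 Ht0. specialize (HB t0).
    assert (0 <= t0 ^ (2*n+2)) by (apply pow_le; lra). pose proof (Rabs_pos (phi k a (XX n t0))).
    unfold uv. nra. }
  specialize (HA Hb).
  assert (Hsm : forall t, 0 <= t <= ss n k -> Rabs (uv n k a t) <= 2 * c0 /\ Rabs (uv1 n k a t) <= 16 * K * c0).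
  { intros t0 Ht0. destruct (u_small n k a Ha t0 Ht0) as [A1 [A2 [A3 A4]]]. split; auto. }
  specialize (HA Hsm Hcc).
  apply sq_to_abs. apply DD_ge1. lra.
  destruct (Rle_or_lt 0 t).
  - apply HA; auto.
  - replace t with (- (- t)) by ring. rewrite uv1_opp.
    replace ((c * - uv1 n k a (- t)) ^ 2) with ((c * uv1 n k a (- t)) ^ 2) by ring. apply HA. lra.
Qed.

Lemma w_bound n k t : Rabs (Derive (w n k) t) <= DD n * Ek n k ^ 3.
Proof.
  set (a := / INR (2*n+2)).
  assert (Ha : -1/2 <= a).
  { unfold a. rewrite INR2n2. assert (1 <= INR (n+1)) by (rewrite plus_INR; simpl; pose proof (pos_INR n); lra).
    assert (0 < / (2 * INR (n+1))) by (apply Rinv_0_lt_compat; lra). lra. }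
  pose proof (K_le_E n k) as HKE. set (E := Ek n k) in *. set (K := INR k + 1) in *.
  set (Eo := INR (4*k*(n+1)+2*n+3)).
  assert (HEo : Eo = E + 2) by (unfold Eo, E, Ek; rewrite !plus_INR; simpl; ring).
  assert (HK : 1 <= K) by (unfold K; pose proof (pos_INR k); lra).
  pose proof (lc0_pos k a Ha) as Hc0. set (c0 := lc k a 0) in *.
  assert (Hcc : (d_const n k * c0) ^ 2 <= 432 * (2 * INR n + 3) * K ^ 2).
  { unfold d_const. apply norm_c; try lra.
    - apply Rmult_lt_0_compat. pose proof (pos_INR n); lra. apply pow_lt; lra.
    - apply (norm_lower n k a Ha (w0 n k) 1). lia. intros t0. rewrite w0_eq. unfold uw, a. rewrite pow_1. ring. }
  set (c := d_const n k) in *.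
  assert (HD : forall t, is_derive (w n k) t (c * uw1 n k a t)).
  { intros t0. eapply dext; [ | | apply (is_derive_scal _ t0 c _ (uw_d n k a t0))].
    intros; unfold w; rewrite w0_eq; reflexivity. reflexivity. }
  rewrite (is_derive_unique _ _ _ (HD t)).
  destruct (ss_props n k) as [S1 [S2 S3]].
  assert (HA := assemble n (uw n k a) (uw1 n k a) Eo E K c c0 (ss n k) HK HKE ltac:(lra) ltac:(lra) Hc0 S1 S2 S3
    (uw_d n k a) (fun t => uw1_d n k a t eq_refl)).
  assert (Hb : exists B, forall t, 0 <= t -> Rabs (uw n k a t) <= B).
  { destruct (Ybound n k a) as [B HB]. exists B. intros t0 Ht0. specialize (HB t0).
    pose proof (spow t0 1 (2*n+2) Ht0 ltac:(lia)). simpl pow in H at 1. rewrite Rmult_1_r in H.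
    pose proof (Rabs_pos (phi k a (XX n t0))).
    unfold uw. rewrite Rabs_mult, (Rabs_right t0) by lra. nra. }
  specialize (HA Hb).
  assert (Hsm : forall t, 0 <= t <= ss n k -> Rabs (uw n k a t) <= 2 * c0 /\ Rabs (uw1 n k a t) <= 16 * K * c0).
  { intros t0 Ht0. destruct (u_small n k a Ha t0 Ht0) as [A1 [A2 [A3 A4]]]. split; auto. }
  specialize (HA Hsm Hcc).
  apply sq_to_abs. apply DD_ge1. lra.
  destruct (Rle_or_lt 0 t).
  - apply HA; auto.
  - replace t with (- (- t)) by ring. rewrite uw1_opp. apply HA. lra.
Qed.

Theorem mainTheorem4 (n : nat) :
  exists C1 : R, 0 < C1 /\
    forall (k : nat) (t : R),
      Rabs (Derive (v n k) t) <= C1 * Rpower (Ek n k) (7/2 - / INR (4*n+4)) /\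
      Rabs (Derive (w n k) t) <= C1 * Rpower (Ek n k) (7/2 - / INR (4*n+4)).
Proof.
  exists (DD n). split. pose proof (DD_ge1 n); lra.
  intros k t.
  assert (HE : 1 <= Ek n k) by (pose proof (K_le_E n k); pose proof (pos_INR k); lra).
  assert (HR : Ek n k ^ 3 <= Rpower (Ek n k) (7/2 - / INR (4*n+4))).
  { rewrite <- Rpower_pow by lra. apply Rle_Rpower; auto.
    assert (4 <= INR (4*n+4)) by (rewrite plus_INR, mult_INR; simpl; pose proof (pos_INR n); nra).
    assert (/ INR (4*n+4) <= / 4) by (apply Rinv_le_contravar; lra). replace (INR 3) with 3 by (simpl; ring). lra. }
  pose proof (DD_ge1 n).
  split.
  - eapply Rle_trans. apply v_bound. apply Rmult_le_compat_l; lra.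
  - eapply Rle_trans. apply w_bound. apply Rmult_le_compat_l; lra.
Qed.
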